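(* Let $n>1$ and $m$ be positive integers, and let $\mathbf{u}\in\mathbb{R}^n$ be a fixed vector. Let $\mathbf{R}\in\mathbb{R}^{m\times n}$ be a random matrix such that either (i) its rows $\mathbf{R}_i$ are i.i.d. samples from an isotropic distribution $P$ on $\mathbb{R}^n$, or (ii) $\hat{\mathbf{R}}$ is a randomly generated matrix with orthogonal rows (uniformly over all rotations). Let $\mathbf{v}=\mathrm{ReLU}\left(\sqrt{2n/m}\cdot\hat{\mathbf{R}}\mathbf{u}\right)$. Then $\mathbb{E}[\lVert\mathbf{v}\rVert^2]=K_n\cdot\lVert\mathbf{u}\rVert^2$, where \[ K_n=\begin{cases}\frac{2S_{n-1}}{S_n}\cdot\left(\frac{2}{3}\cdot\frac{4}{5}\cdots\frac{n-2}{n-1}\right) & \text{if } n \text{ is even},\\[4pt] \frac{2S_{n-1}}{S_n}\cdot\left(\frac{1}{2}\cdot\frac{3}{4}\cdots\frac{n-2}{n-1}\right)\cdot\frac{\pi}{2} & \text{otherwise},\end{cases} \] and $S_n$ denotes the surface area of a unit $n$-dimensional sphere (empty products are equal to $1$).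
   Context: For a matrix $\mathbf{R}$ with nonzero rows $\mathbf{R}_i$, $\hat{\mathbf{R}}$ denotes the matrix whose $i$-th row is $\hat{\mathbf{R}}_i=\mathbf{R}_i/\lVert\mathbf{R}_i\rVert_2$ (each row normalized to unit Euclidean norm). A distribution $P$ on $\mathbb{R}^n$ is isotropic if it is invariant under all orthogonal transformations of $\mathbb{R}^n$ (all directions equally likely), with no mass at the origin. In case (ii), ''randomly generated with orthogonal rows'' means $\hat{\mathbf{R}}$ has orthonormal rows (so $m\le n$) and its distribution is uniform over all rotations (Haar-distributed). $\mathrm{ReLU}$ is applied coordinatewise, $\mathrm{ReLU}(x)=\max(0,x)$. *)

(* Defs.v *)
From HB Require Import structures.
From mathcomp Require Import all_boot all_order all_algebra.
From mathcomp Require Import all_classical all_reals all_analysis.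
Set Implicit Arguments. Unset Strict Implicit. Unset Printing Implicit Defensive.
Import Order.TTheory GRing.Theory Num.Theory.
Import numFieldNormedType.Exports.
Local Open Scope classical_set_scope.
Local Open Scope ring_scope.

Section Defs.
Variable R : realType.

Definition borelM (p q : nat) : set (set 'M[R]_(p, q)) :=
  <<s [set A | open A] >>.

Definition enorm (n : nat) (x : 'rV[R]_n) : R :=
  Num.sqrt (\sum_(j < n) x ord0 j ^+ 2).

Definition cnorm (n : nat) (x : 'cV[R]_n) : R :=
  Num.sqrt (\sum_(j < n) x j ord0 ^+ 2).

Definition rownormalize (m n : nat) (A : 'M[R]_(m, n)) : 'M[R]_(m, n) :=
  \matrix_(i < m, j < n) (A i j / enorm (row i A)).

Definition ReLU_cV (m : nat) (x : 'cV[R]_m) : 'cV[R]_m :=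
  \col_(i < m) Num.max 0 (x i ord0).

Definition orthogonal (n : nat) (Q : 'M[R]_n) : Prop := Q *m Q^T = 1%:M.

Definition orthonormal_rows (m n : nat) (A : 'M[R]_(m, n)) : Prop :=
  A *m A^T = 1%:M.

(* Surface area S_k of the unit k-dimensional sphere S^k (subset of R^(k+1)),
   via the standard recursion S_0 = 2, S_1 = 2 pi, S_(k+2) = 2 pi S_k / (k+1),
   i.e. S_k = 2 pi^((k+1)/2) / Gamma((k+1)/2). *)
Fixpoint sphere_area (k : nat) : R :=
  match k with
  | 0 => 2
  | 1 => 2 * pi
  | (k'.+2) as _ => 2 * pi * sphere_area k' / (k'.+1)%:R
  end.

Definition Kconst (n : nat) : R :=
  if ~~ odd n then
    2 * sphere_area n.-1 / sphere_area n *
    \prod_(1 <= j < n./2) ((2 * j)%:R / (2 * j + 1)%:R)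
  else
    2 * sphere_area n.-1 / sphere_area n *
    \prod_(1 <= j < (n./2).+1) ((2 * j - 1)%:R / (2 * j)%:R) * (pi / 2).

Section Prob.
Context (d : measure_display) (T : measurableType d) (P : probability T R).

Definition rmeasurable (p q : nat) (X : T -> 'M[R]_(p, q)) : Prop :=
  forall B, borelM B -> measurable (X @^-1` B).

Definition same_law (p q : nat) (X Y : T -> 'M[R]_(p, q)) : Prop :=
  forall B, borelM B -> P (X @^-1` B) = P (Y @^-1` B).

Definition independent_rows (m n : nat) (X : 'I_m -> T -> 'rV[R]_n) : Prop :=
  forall (I : {set 'I_m}) (B : 'I_m -> set 'rV[R]_n),
    (forall i, borelM (B i)) ->
    P (\bigcap_(i in [set` I]) (X i @^-1` B i)) =
    (\prod_(i in I) P (X i @^-1` B i))%E.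

Definition isotropic_law (n : nat) (X : T -> 'rV[R]_n) : Prop :=
  (forall Q : 'M[R]_n, orthogonal Q -> same_law X (fun w => X w *m Q)) /\
  P (X @^-1` [set 0]) = 0%E.

Definition iid_isotropic_rows (m n : nat) (A : T -> 'M[R]_(m, n)) : Prop :=
  (forall i, rmeasurable (fun w => row i (A w))) /\
  independent_rows (fun i w => row i (A w)) /\
  (exists X0 : T -> 'rV[R]_n, rmeasurable X0 /\ isotropic_law X0 /\
     forall i, same_law (fun w => row i (A w)) X0).

(* Case (ii): hat(A) has orthonormal rows and is uniformly (Haar)
   distributed over rotations: its law is invariant under every orthogonal
   transformation of R^n. *)
Definition haar_orthogonal_rows (m n : nat) (A : T -> 'M[R]_(m, n)) : Prop :=
  (m <= n)%N /\
  rmeasurable A /\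
  (forall w i, row i (A w) != 0) /\
  (forall w, orthonormal_rows (rownormalize (A w))) /\
  (forall Q : 'M[R]_n, orthogonal Q ->
     same_law (fun w => rownormalize (A w))
              (fun w => rownormalize (A w) *m Q)).

End Prob.
End Defs.

(* Main.v *)
Require Import Defs.
From HB Require Import structures.
From mathcomp Require Import all_boot all_order all_algebra.
From mathcomp Require Import all_classical all_reals all_analysis.
From mathcomp Require Import ring lra.
From mathcomp Require Import measurable_realfun zify.
Import Order.TTheory GRing.Theory Num.Theory.
Import numFieldNormedType.Exports.
Local Open Scope classical_set_scope.
Local Open Scope ring_scope.
Set Implicit Arguments. Unset Strict Implicit. Unset Printing Implicit Defensive.

Section Alg.
Variable R : realType.

Lemma enormE n (x : 'rV[R]_n) : enorm x = Num.sqrt ((x *m x^T) 0 0).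
Proof.
rewrite /enorm mxE; congr Num.sqrt; apply: eq_bigr => j _.
by rewrite mxE expr2.
Qed.

Lemma enorm_mulQ n (x : 'rV[R]_n) Q : Defs.orthogonal Q -> enorm (x *m Q) = enorm x.
Proof.
move=> oQ; rewrite !enormE trmx_mul !mulmxA -(mulmxA x) oQ mulmx1 //.
Qed.

Lemma row_rn p n (B : 'M[R]_(p, n)) r :
  row r (rownormalize B) = (enorm (row r B))^-1 *: row r B.
Proof. by apply/rowP => j; rewrite !mxE mulrC. Qed.

Lemma row_rn_mulQ p n (B : 'M[R]_(p, n)) r Q : Defs.orthogonal Q ->
  row r (rownormalize (B *m Q)) = row r (rownormalize B) *m Q.
Proof.
move=> oQ; rewrite !row_rn row_mul enorm_mulQ // scalemxAl //.
Qed.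

Lemma enorm_scale n (x : 'rV[R]_n) a : enorm (a *: x) = `|a| * enorm x.
Proof.
rewrite /enorm -sqrtr_sqr -sqrtrM ?sqr_ge0 //; congr Num.sqrt.
rewrite mulr_sumr; apply: eq_bigr => j _; rewrite mxE exprMn //.
Qed.

Lemma enorm_ge0 n (x : 'rV[R]_n) : 0 <= enorm x.
Proof. exact: sqrtr_ge0. Qed.

Lemma enorm_eq0 n (x : 'rV[R]_n) : (enorm x == 0) = (x == 0).
Proof.
have s0 : 0 <= \sum_(j < n) x ord0 j ^+ 2 by apply: sumr_ge0 => j _; exact: sqr_ge0.
rewrite /enorm sqrtr_eq0 le_eqVlt ltNge s0 orbF.
rewrite psumr_eq0 /=; last by move=> j _; exact: sqr_ge0.
apply/allP/eqP => [H|->]; last by move=> j _; rewrite mxE expr0n.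
apply/rowP => j; rewrite mxE; have := H j (mem_index_enum _).
by rewrite sqrf_eq0 => /eqP.
Qed.

Lemma rn_idem p n (B : 'M[R]_(p, n)) : rownormalize (rownormalize B) = rownormalize B.
Proof.
apply/row_matrixP => r; rewrite !row_rn enorm_scale.
have [->|nz] := eqVneq (row r B) 0; first by rewrite !scaler0.
have e0 : enorm (row r B) != 0 by rewrite enorm_eq0.
rewrite ger0_norm ?invr_ge0 ?enorm_ge0 // mulVf // invr1 scale1r //.
Qed.

End Alg.
Section House.
Variable R : realType.

Lemma dotE k (x y : 'cV[R]_k) : x^T *m y = (\sum_j x j 0 * y j 0)%:M.
Proof.
rewrite [LHS]mx11_scalar; congr (_%:M); rewrite mxE; apply: eq_bigr => j _.
by rewrite mxE.
Qed.

Lemma cnorm_sq k (x : 'cV[R]_k) : cnorm x ^+ 2 = \sum_j x j 0 ^+ 2.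
Proof. by rewrite sqr_sqrtr //; apply: sumr_ge0 => j _; exact: sqr_ge0. Qed.

Lemma householder n (u : 'cV[R]_n.+1) :
  exists Q : 'M[R]_n.+1, Defs.orthogonal Q /\ Q *m u = cnorm u *: delta_mx 0 0.
Proof.
set a := cnorm u; set e : 'cV[R]_n.+1 := delta_mx 0 0.
set w := u - a *: e.
have wdef : w = u - a *: e by [].
clearbody w.
have [w0|wn0] := eqVneq w 0.
  exists 1%:M; split; first by rewrite /Defs.orthogonal trmx1 mulmx1.
  by rewrite mul1mx; apply/eqP; rewrite -subr_eq0 -wdef w0.
set s := (w^T *m w) 0 0.
have wtw : w^T *m w = s%:M by rewrite [LHS]mx11_scalar.
have s0 : s != 0.
  rewrite /s dotE mxE eqxx mulr1n.
  apply: contra wn0; rewrite psumr_eq0 /=; last by move=> j _; rewrite -expr2; exact: sqr_ge0.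
  move=> /allP H; apply/eqP/matrixP => i j; rewrite (ord1 j) [RHS]mxE.
  by move: (H i (mem_index_enum _)); rewrite mulf_eq0 orbb => /eqP.
have u0E k (x : 'cV[R]_k.+1) : delta_mx 0 0 *m x = (x 0 0)%:M.
  by rewrite -rowE [LHS]mx11_scalar mxE.
have uu : u^T *m u = (a ^+ 2)%:M.
  by rewrite dotE /a cnorm_sq; congr (_%:M); apply: eq_bigr => j _; rewrite expr2.
have eu : e^T *m u = (u 0 0)%:M by rewrite /e trmx_delta u0E.
have ue : u^T *m e = (u 0 0)%:M by rewrite -(trmxK e) -trmx_mul eu tr_scalar_mx.
have ee : e^T *m e = 1%:M by rewrite /e trmx_delta u0E mxE.
have wtr : w^T = u^T - a *: e^T by rewrite wdef linearB linearZ.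
have wu : w^T *m u = (a ^+ 2 - a * u 0 0)%:M.
  by rewrite wtr mulmxBl -scalemxAl eu uu scale_scalar_mx raddfB.
have we : w^T *m e = (u 0 0 - a)%:M.
  by rewrite wtr mulmxBl -scalemxAl ee ue scale_scalar_mx mulr1 raddfB.
have sE : s = 2 * (a ^+ 2 - a * u 0 0).
  have : w^T *m w = (2 * (a ^+ 2 - a * u 0 0))%:M.
    rewrite {2}wdef mulmxBr -scalemxAr wu we scale_scalar_mx -raddfB; congr (_%:M).
    by rewrite mulrBr; ring.
  by rewrite wtw => /matrixP /(_ 0 0); rewrite !mxE eqxx !mulr1n.
set k := 2 / s.
exists (1%:M - k *: (w *m w^T)); split.
  have trZ : (k *: (w *m w^T))^T = k *: (w *m w^T)^T by apply/matrixP => i j; rewrite !mxE.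
  rewrite /Defs.orthogonal [(_ - _)^T]linearB /= trZ trmx1 trmx_mul trmxK.
  rewrite mulmxBl mul1mx mulmxBr mulmx1 -!scalemxAl -!scalemxAr.
  rewrite mulmxA -(mulmxA w) wtw mul_mx_scalar -scalemxAl scalerA scalerA.
  have -> : k * (k * s) = k + k by rewrite /k; field.
  by rewrite scalerDl opprB addrK subrK.
rewrite mulmxBl mul1mx -scalemxAl -mulmxA wu mul_mx_scalar scalerA.
have -> : k * (a ^+ 2 - a * u 0 0) = 1 by rewrite /k sE; field; move: s0; rewrite sE mulf_eq0 negb_or => /andP[].
by rewrite scale1r wdef opprB addrC subrK.
Qed.
End House.
Section Borel.
Variable R : realType.

Definition Mty (p q : nat) := g_sigma_algebraType [set A : set 'M[R]_(p, q) | open A].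

Definition Bor (p q : nat) (F : 'M[R]_(p, q) -> R) :=
  @measurable_fun _ _ (Mty p q) R setT F.

Lemma Bor_coord p q i j : Bor (fun M : 'M[R]_(p, q) => M i j).
Proof.
apply: measurability; first exact: measurable_realfun.RGenOInfty.measurableE.
move=> _ [_ [x ->] <-]; rewrite setTI.
apply: sub_sigma_algebra.
move: (@coord_continuous R p q i j) => /continuousP; apply.
exact: rray_open.
Qed.

Lemma Bor_borelM p q (F : 'M[R]_(p, q) -> R) B :
  Bor F -> measurable B -> borelM (F @^-1` B).
Proof. by move=> mF mB; have := mF measurableT B mB; rewrite setTI. Qed.


Definition tfun p n (r : 'I_p) (c : 'cV[R]_n) (B : 'M[R]_(p, n)) : R :=
  ((row r (rownormalize B)) *m c) 0 0.

Lemma tfunE p n (r : 'I_p) (c : 'cV[R]_n) B :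
  tfun r c B = (\sum_j B r j * c j 0) * ((\sum_j B r j ^+ 2) `^ (- 2^-1)).
Proof.
rewrite /tfun row_rn -scalemxAl mxE mulrC; congr (_ * _).
  by rewrite mxE; apply: eq_bigr => j _; rewrite mxE.
rewrite powRN powR12_sqrt; last by apply: sumr_ge0 => j _; exact: sqr_ge0.
by rewrite /enorm; congr (Num.sqrt _)^-1; apply: eq_bigr => j _; rewrite mxE.
Qed.

Lemma Bor_tfun p n (r : 'I_p) (c : 'cV[R]_n) : Bor (tfun r c).
Proof.
rewrite /Bor (_ : tfun r c = fun B => (\sum_j B r j * c j 0) * ((\sum_j B r j ^+ 2) `^ (- 2^-1))); last first.
  by apply: funext => B; rewrite tfunE.
apply: measurable_funM.
  apply: measurable_sum => j; apply: measurable_funM; first exact: Bor_coord.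
  exact: measurable_cst.
have msum : Bor (fun B : 'M[R]_(p, n) => \sum_j B r j ^+ 2).
  by apply: measurable_sum => j; apply: measurable_funX; exact: Bor_coord.
exact: (measurableT_comp (measurable_powR _) msum).
Qed.

Lemma Bor_comp p q (F : 'M[R]_(p, q) -> R) (phi : R -> R) :
  measurable_fun setT phi -> Bor F -> Bor (phi \o F).
Proof. by move=> mphi mF; apply: measurableT_comp. Qed.

End Borel.
Section Kc.
Variable R : realType.

Lemma sa_gt0 k : 0 < sphere_area R k.
Proof.
suff : 0 < sphere_area R k /\ 0 < sphere_area R k.+1 by case.
elim: k => [|k [IH1 IH2]]; first by split => //=; rewrite mulr_gt0 // pi_gt0.
split => //=; case: k IH1 IH2 => [|k] IH1 IH2 /=; rewrite ?divr_gt0 // ?mulr_gt0 // ?pi_gt0 //.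
Qed.

Lemma KoddE t : Kconst R t.*2.+1 = 2 * sphere_area R t.*2 / sphere_area R t.*2.+1 *
  \prod_(1 <= j < t.+1) ((2 * j - 1)%:R / (2 * j)%:R) * (pi / 2).
Proof. by rewrite /Kconst /= odd_double /= (uphalf_double t). Qed.

Lemma KevenE t : Kconst R t.*2.+2 = 2 * sphere_area R t.*2.+1 / sphere_area R t.*2.+2 *
  \prod_(1 <= j < t.+1) ((2 * j)%:R / (2 * j + 1)%:R).
Proof. by rewrite /Kconst /= odd_double /= (doubleK t). Qed.

Lemma saS2 k : sphere_area R k.+2 = 2 * pi * sphere_area R k / k.+1%:R.
Proof. by []. Qed.

Lemma Kodd t : Kconst R t.*2.+1 = 1.
Proof.
have := pi_gt0 R; rewrite lt0r => /andP[p0 _].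
elim: t => [|t IH].
  rewrite KoddE big_geq // mulr1 /=; move: (pi : R) p0 => q q0; by field.
rewrite KoddE in IH; rewrite KoddE -[in RHS]IH doubleS !saS2 big_nat_recr //.
have a0 := sa_gt0 t.*2; have a1 := sa_gt0 t.*2.+1.
move: (sphere_area R t.*2) (sphere_area R t.*2.+1) a0 a1 => x y x0 y0.
set Pr := \prod_(_ <= _ < _) _.
move: (pi : R) p0 => q q0.
have -> : (2 * t.+1 - 1 = t.*2.+1)%N by rewrite -mul2n; lia.
have -> : (2 * t.+1 = t.*2.+2)%N by rewrite -mul2n; lia.
rewrite /=; field; have : (0 : R) <= t.*2%:R := ler0n _ _.
by move=> h; rewrite q0 !gt_eqF //; lra.
Qed.
Lemma Keven t : Kconst R t.*2.+2 = 1.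
Proof.
have := pi_gt0 R; rewrite lt0r => /andP[p0 _].
elim: t => [|t IH].
  rewrite KevenE big_geq // mulr1 /= mulr1n divr1; move: (pi : R) p0 => q q0; by field.
rewrite KevenE in IH; rewrite KevenE -[in RHS]IH doubleS !saS2 big_nat_recr //.
have a0 := sa_gt0 t.*2; have a1 := sa_gt0 t.*2.+1.
move: (sphere_area R t.*2) (sphere_area R t.*2.+1) a0 a1 => x y x0 y0.
set Pr := \prod_(_ <= _ < _) _.
move: (pi : R) p0 => q q0.
have -> : (2 * t.+1 + 1 = t.*2.+3)%N by rewrite -mul2n; lia.
have -> : (2 * t.+1 = t.*2.+2)%N by rewrite -mul2n; lia.
rewrite /=; field; have : (0 : R) <= t.*2%:R := ler0n _ _.
by move=> h; rewrite q0 !gt_eqF //; lra.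
Qed.

Lemma Kconst1 n : (0 < n)%N -> Kconst R n = 1.
Proof.
move=> n0; have := odd_double_half n; case: (odd n) => /= e; rewrite -e.
  by rewrite add1n Kodd.
move: e; case: n./2 => [|t] e; first by move: n0; rewrite -e.
by rewrite add0n doubleS Keven.
Qed.
End Kc.
Section ProbL.
Context (R : realType) (d : measure_display) (T : measurableType d)
  (P : probability T R).

Lemma rmeas_comp p q (X : T -> 'M[R]_(p, q)) (F : 'M[R]_(p, q) -> R) :
  rmeasurable X -> Bor F -> measurable_fun setT (F \o X).
Proof.
move=> mX mF _ B mB; rewrite setTI comp_preimage; apply: mX.
exact: Bor_borelM.
Qed.

Lemma transfer (f1 f2 : T -> R) :
  measurable_fun setT f1 -> measurable_fun setT f2 ->
  (forall x, 0 <= f1 x) -> (forall x, 0 <= f2 x) ->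
  (forall B, measurable B -> P (f1 @^-1` B) = P (f2 @^-1` B)) ->
  (\int[P]_x (f1 x)%:E = \int[P]_x (f2 x)%:E)%E.
Proof.
move=> m1 m2 p1 p2 law.
pose g := fun y : R => (Num.max y 0)%:E.
have mg : measurable_fun setT g.
  apply/measurable_EFinP; apply: measurable_maxr => //; exact: measurable_cst.
have g0 : {in setT, forall y, (0 <= g y)%E}.
  by move=> y _; rewrite lee_fin le_max lexx orbT.
have e1 : (\int[P]_x (f1 x)%:E = \int[pushforward P f1]_(y in setT) g y)%E.
  rewrite (ge0_integral_pushforward m1) // preimage_setT; apply: eq_integral => x _.
  by rewrite /g /= max_l.
have e2 : (\int[P]_x (f2 x)%:E = \int[pushforward P f2]_(y in setT) g y)%E.
  rewrite (ge0_integral_pushforward m2) // preimage_setT; apply: eq_integral => x _.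
  by rewrite /g /= max_l.
rewrite e1 e2; apply: eq_measure_integral => A mA _.
exact: law.
Qed.

End ProbL.
Section Key.
Context (R : realType) (d : measure_display) (T : measurableType d)
  (P : probability T R).
Variables (p n : nat) (W V : T -> 'M[R]_(p, n.+1)) (r : 'I_p).
Hypotheses (mV : rmeasurable V)
  (WV : forall w, rownormalize (W w) = rownormalize (V w))
  (inv : forall Q, Defs.orthogonal Q -> same_law P W (fun w => W w *m Q))
  (z0 : P [set w | row r (V w) = 0] = 0%E).

Definition EE (phi : R -> R) (c : 'cV[R]_n.+1) :=
  (\int[P]_w (phi (tfun r c (W w)))%:E)%E.

Lemma tfunWV c w : tfun r c (W w) = tfun r c (V w).
Proof. by rewrite /tfun WV. Qed.

Lemma mtf (phi : R -> R) c : measurable_fun setT phi ->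
  measurable_fun setT (fun w => phi (tfun r c (W w))).
Proof.
move=> mphi; rewrite (_ : (fun w => _) = (phi \o tfun r c) \o V); last first.
  by apply: funext => w /=; rewrite tfunWV.
exact: rmeas_comp mV (Bor_comp mphi (Bor_tfun r c)).
Qed.

Lemma tfun_mulQ c (B : 'M[R]_(p, n.+1)) Q : Defs.orthogonal Q ->
  tfun r c (B *m Q) = tfun r (Q *m c) B.
Proof. by move=> oQ; rewrite /tfun row_rn_mulQ // -mulmxA. Qed.

Lemma EE_inv (phi : R -> R) c (Q : 'M[R]_n.+1) : measurable_fun setT phi -> (forall x, 0 <= phi x) ->
  Defs.orthogonal Q -> EE phi c = EE phi (Q *m c).
Proof.
move=> mphi phi0 oQ; apply: transfer; [exact: mtf|exact: mtf|by []|by []|].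
move=> B mB.
rewrite [LHS](_ : _ = P (W @^-1` ((phi \o tfun r c) @^-1` B))) //.
rewrite (inv oQ (Bor_borelM (Bor_comp mphi (Bor_tfun r c)) mB)).
by congr (P _); apply/seteqP; split => w /=; rewrite tfun_mulQ.
Qed.

Lemma tfun_scale (a : R) (c : 'cV[R]_n.+1) (B : 'M[R]_(p, n.+1)) : tfun r (a *: c) B = a * tfun r c B.
Proof. by rewrite /tfun -scalemxAr mxE. Qed.

Lemma tfun_opp (c : 'cV[R]_n.+1) (B : 'M[R]_(p, n.+1)) : tfun r (- c) B = - tfun r c B.
Proof. by rewrite /tfun mulmxN mxE. Qed.

Definition sq (x : R) := x ^+ 2.
Definition relu2 (x : R) := (Num.max 0 x) ^+ 2.

Lemma msq : measurable_fun setT sq.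
Proof. exact: exprn_measurable. Qed.

Lemma mrelu2 : measurable_fun setT relu2.
Proof.
apply: measurable_funX; apply: measurable_maxr => //; exact: measurable_cst.
Qed.

Lemma EE_sq_scale (a : R) (c : 'cV[R]_n.+1) : EE sq (a *: c) = ((a ^+ 2)%:E * EE sq c)%E.
Proof.
rewrite /EE; under eq_integral => w _ do rewrite tfun_scale /sq exprMn EFinM.
rewrite ge0_integralZl_EFin //; last exact: sqr_ge0.
- by move=> w _; rewrite lee_fin sqr_ge0.
- by apply/measurable_EFinP; exact: (mtf c msq).
Qed.

Definition e0 : 'cV[R]_n.+1 := delta_mx 0 0.

Lemma EE_sq_norm (c : 'cV[R]_n.+1) : EE sq c = ((cnorm c ^+ 2)%:E * EE sq e0)%E.
Proof.
have [Q [oQ Qc]] := householder c.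
by rewrite (EE_inv _ msq _ oQ) ?Qc ?EE_sq_scale // => x; exact: sqr_ge0.
Qed.


Lemma sum_sq (B : 'M[R]_(p, n.+1)) :
  \sum_(j < n.+1) tfun r (delta_mx j ord0) B ^+ 2 = (row r B != 0)%:R.
Proof.
set s := enorm (row r B).
have sE : s ^+ 2 = \sum_(j < n.+1) B r j ^+ 2.
  rewrite /s /enorm sqr_sqrtr; last by apply: sumr_ge0 => j _; exact: sqr_ge0.
  by apply: eq_bigr => j _; rewrite mxE.
rewrite (eq_bigr (fun j => s^-1 ^+ 2 * B r j ^+ 2)); last first.
  by move=> j _; rewrite /tfun -colE row_rn !mxE exprMn.
rewrite -mulr_sumr -sE.
have [h|nz] := eqVneq (row r B) 0.
  have -> : s = 0 by apply/eqP; rewrite /s enorm_eq0; exact/eqP.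
  by rewrite invr0 expr0n mul0r.
have s0 : s != 0 by rewrite /s enorm_eq0.
by rewrite exprVn mulVf // expf_neq0.
Qed.

Lemma Zset : [set w | row r (V w) = 0] =
  (fun w => \sum_(j < n.+1) tfun r (delta_mx j ord0) (W w) ^+ 2) @^-1` [set 0].
Proof.
apply/seteqP; split => w /=.
  by move=> h; rewrite (eq_bigr (fun j => tfun r (delta_mx j ord0) (V w) ^+ 2)) ?sum_sq ?h ?eqxx // => j _; rewrite tfunWV.
rewrite (eq_bigr (fun j => tfun r (delta_mx j ord0) (V w) ^+ 2)) ?sum_sq; last by move=> j _; rewrite tfunWV.
by case: eqP => // _ /eqP; rewrite oner_eq0.
Qed.

Lemma mZ : measurable [set w | row r (V w) = 0].
Proof.
rewrite Zset -[X in measurable X]setTI; apply: measurable_sum => //.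
by move=> j; exact: (mtf _ msq).
Qed.

Lemma EE_sum : (\sum_(j < n.+1) EE sq (delta_mx j ord0) = 1)%E.
Proof.
rewrite /EE -ge0_integral_sum //; last 2 first.
- by move=> j; apply/measurable_EFinP; exact: (mtf _ msq).
- by move=> j w _; rewrite lee_fin sqr_ge0.
set Z := [set w | row r (V w) = 0].
rewrite (eq_integral (fun w => (\1_(~` Z) w)%:E)); last first.
  move=> w _; rewrite sumEFin indicE; congr (_%:E).
  rewrite (eq_bigr (fun j => tfun r (delta_mx j ord0) (V w) ^+ 2)); last by move=> j _; rewrite /sq tfunWV.
  rewrite sum_sq in_setC; congr (_%:R); congr (~~ _).
  by apply/idP/idP; rewrite inE /Z /= => /eqP.
rewrite integral_indic //; last exact/measurableC/mZ.
rewrite setIT; transitivity (1 - P Z)%E; first exact: (probability_setC P mZ).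
by rewrite /Z z0 sube0.
Qed.


Lemma mx_pos (t : R) : 0 <= t -> Num.max 0 t = t.
Proof. by move=> t0; rewrite max_r. Qed.

Lemma mx_neg (t : R) : t <= 0 -> Num.max 0 t = 0.
Proof. by move=> t0; rewrite max_l. Qed.

Lemma relu_sum t : relu2 t + relu2 (- t) = sq t.
Proof.
rewrite /relu2 /sq; have [t0|t0] := leP 0 t.
  by rewrite (@mx_neg (- t)) ?oppr_le0 // expr0n addr0.
by rewrite (@mx_pos (- t)) ?oppr_ge0 ?ltW // expr0n add0r sqrrN.
Qed.

Lemma ortho_neg1 : Defs.orthogonal (- 1%:M : 'M[R]_n.+1).
Proof.
rewrite /Defs.orthogonal mulNmx mul1mx.
by apply/matrixP => i j; rewrite !mxE opprK eq_sym.
Qed.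

Lemma EE_relu c : (EE relu2 c + EE relu2 c = EE sq c)%E.
Proof.
have r0 : forall x, 0 <= relu2 x by move=> x; exact: sqr_ge0.
rewrite {2}(EE_inv c mrelu2 r0 ortho_neg1) mulNmx mul1mx /EE.
rewrite -ge0_integralD //; last 4 first.
- by move=> w _; rewrite lee_fin.
- by apply/measurable_EFinP; exact: (mtf _ mrelu2).
- by move=> w _; rewrite lee_fin.
- by apply/measurable_EFinP; exact: (mtf _ mrelu2).
by apply: eq_integral => w _; rewrite -EFinD tfun_opp relu_sum.
Qed.

Lemma cnorm_delta (j : 'I_n.+1) : cnorm (delta_mx j ord0 : 'cV[R]_n.+1) ^+ 2 = 1.
Proof.
rewrite cnorm_sq (bigD1 j) //= big1 ?addr0; first by rewrite mxE !eqxx expr1n.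
by move=> i ij; rewrite mxE (negbTE ij) /= expr0n.
Qed.

Lemma EE_e0 : EE sq e0 = (n.+1%:R^-1)%:E.
Proof.
have := EE_sum; rewrite (eq_bigr (fun _ => EE sq e0)); last first.
  by move=> j _; rewrite EE_sq_norm cnorm_delta mul1e.
rewrite sumr_const card_ord.
have : (0 <= EE sq e0)%E by apply: integral_ge0 => w _; rewrite lee_fin sqr_ge0.
case: (EE sq e0) => [x||] //=; last first.
  move=> _ h; have : (+oo = 1%:E :> \bar R)%E by rewrite -h; exact/esym/enatmul_pinfty.
  by [].
move=> _ h0; have : ((x *+ n.+1)%:E = 1%:E :> \bar R)%E by rewrite -h0; exact: EFin_natmul.
case=> h; congr (_%:E).
have nz : n.+1%:R != 0 :> R by rewrite pnatr_eq0.
move: h; rewrite -(mulr_natr x) => h.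
by apply: (mulIf nz); rewrite h mulVf.
Qed.


Lemma key (c : 'cV[R]_n.+1) :
  (\int[P]_w (relu2 (tfun r c (V w)))%:E = ((cnorm c ^+ 2) / (2 * n.+1%:R))%:E)%E.
Proof.
have e : (EE relu2 c + EE relu2 c = (cnorm c ^+ 2 * n.+1%:R^-1)%:E)%E.
  by rewrite EE_relu EE_sq_norm EE_e0 -EFinM.
rewrite (_ : (\int[P]_w _)%E = EE relu2 c); last first.
  by apply: eq_integral => w _; rewrite tfunWV.
have : (0 <= EE relu2 c)%E by apply: integral_ge0 => w _; rewrite lee_fin sqr_ge0.
move: e; case: (EE relu2 c) => [y||] //= e _.
move: e; rewrite -EFinD => -[] h; congr (_%:E).
have nz : n.+1%:R != 0 :> R by rewrite pnatr_eq0.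
have -> : cnorm c ^+ 2 / (2 * n.+1%:R) = (cnorm c ^+ 2 / n.+1%:R) / 2.
  by field; rewrite addrC natr1 pnatr_eq0.

by rewrite -h; field.
Qed.

End Key.

Lemma tfun_row (R : realType) p n (i : 'I_p) (c : 'cV[R]_n) (B : 'M[R]_(p, n)) :
  tfun i c B = tfun 0 c (row i B).
Proof.
rewrite /tfun !row_rn.
have -> : row 0 (row i B) = row i B by apply/rowP => j; rewrite !mxE.
by [].
Qed.

Lemma integrand (R : realType) n m (u : 'cV[R]_n) (B : 'M[R]_(m, n)) :
  cnorm (ReLU_cV (Num.sqrt (2 * n%:R / m%:R) *: (rownormalize B *m u))) ^+ 2 =
  \sum_(i < m) (2 * n%:R / m%:R) * relu2 (tfun i u B).
Proof.
rewrite cnorm_sq; apply: eq_bigr => i _.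
have k0 : 0 <= 2 * n%:R / m%:R :> R by rewrite divr_ge0 // mulr_ge0.
rewrite /relu2 !mxE -[in RHS](sqr_sqrtr k0) -exprMn maxr_pMr ?sqrtr_ge0 // mulr0.
congr ((Num.max 0 (_ * _)) ^+ 2).
by rewrite /tfun !mxE; apply: eq_bigr => j _; rewrite !mxE.
Qed.

Theorem theorem1 (R : realType) (d : measure_display) (T : measurableType d)
  (P : probability T R) (n m : nat) (u : 'cV[R]_n)
  (A : T -> 'M[R]_(m, n)) :
  (1 < n)%N -> (0 < m)%N ->
  (iid_isotropic_rows P A \/ haar_orthogonal_rows P A) ->
  let v := fun w => ReLU_cV (Num.sqrt (2 * n%:R / m%:R) *: (rownormalize (A w) *m u)) in
  (\int[P]_w ((cnorm (v w)) ^+ 2)%:E = (Kconst R n * (cnorm u) ^+ 2)%:E)%E.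
Proof.
move=> n1 m0 H v; rewrite /v; clear v.
rewrite Kconst1 ?(ltnW n1) // mul1r.
case: n u A H n1 => [//|n] u A H n1.
set k := (2 * n.+1%:R / m%:R : R).
have k0 : 0 <= k by rewrite divr_ge0 // mulr_ge0.
have per_i : forall i : 'I_m,
    (\int[P]_w (relu2 (tfun i u (A w)))%:E = ((cnorm u ^+ 2) / (2 * n.+1%:R))%:E)%E.
  move=> i; case: H => [[mrow [_ [X0 [mX0 [[invX zX] law]]]]]|[_ [mA [nz [_ invA]]]]].
    rewrite (_ : (\int[P]_w _)%E = (\int[P]_w (relu2 (tfun 0 u (X0 w)))%:E)%E).
      apply: (key (W := X0)) => //.
      rewrite (_ : [set w | row 0 (X0 w) = 0] = X0 @^-1` [set 0]) //.
      apply/seteqP; split => w /=.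
        by move=> h; rewrite -h; apply/rowP => j; rewrite !mxE.
      by move=> ->; apply/rowP => j; rewrite !mxE.
    under eq_integral => w _ do rewrite tfun_row.
    apply: transfer.
    - exact: (rmeas_comp (mrow i) (Bor_comp (@mrelu2 R) (Bor_tfun (0 : 'I_1) u))).
    - exact: (rmeas_comp mX0 (Bor_comp (@mrelu2 R) (Bor_tfun (0 : 'I_1) u))).
    - by move=> w; exact: sqr_ge0.
    - by move=> w; exact: sqr_ge0.
    - move=> B mB; exact: (law i _ (Bor_borelM (Bor_comp (@mrelu2 R) (Bor_tfun (0 : 'I_1) u)) mB)).
  apply: (key (W := fun w => rownormalize (A w))) => //.
  - by move=> w; rewrite rn_idem.
  - rewrite (_ : [set w | row i (A w) = 0] = set0) ?measure0 //.
    by apply/seteqP; split => w //= /eqP; rewrite (negbTE (nz w i)).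
have mrel : forall i : 'I_m, measurable_fun setT (fun w => relu2 (tfun i u (A w))).
  move=> i; case: (H) => [[mrow _]|[_ [mA _]]].
    rewrite (_ : (fun w => _) = (@relu2 R \o tfun (0 : 'I_1) u) \o (fun w => row i (A w))).
      exact: (rmeas_comp (mrow i) (Bor_comp (@mrelu2 R) (Bor_tfun (0 : 'I_1) u))).
    by apply: funext => w /=; rewrite tfun_row.
  exact: (rmeas_comp mA (Bor_comp (@mrelu2 R) (Bor_tfun i u))).
under eq_integral => w _ do rewrite integrand -sumEFin.
rewrite ge0_integral_sum //; last 2 first.
- move=> i; apply/measurable_EFinP; apply: measurable_funM; first exact: measurable_cst.
  exact: mrel.
- by move=> i w _; rewrite lee_fin mulr_ge0 // sqr_ge0.
rewrite (eq_bigr (fun i => ((k * ((cnorm u ^+ 2) / (2 * n.+1%:R)))%:E)%E)); last first.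
  move=> i _; under eq_integral => w _ do rewrite EFinM.
  rewrite ge0_integralZl_EFin // ?per_i //.
  - by move=> w _; rewrite lee_fin sqr_ge0.
  - by apply/measurable_EFinP; exact: mrel.
rewrite sumEFin sumr_const card_ord; congr (_%:E).
rewrite /k -mulr_natl; field.
by rewrite addrC natr1 !pnatr_eq0 /= -lt0n.
Qed.
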